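(* Identify the letters $a_i$ with the positive integers $i$. Let $\mathbf{NCQSym}$ be the Hopf algebra with basis $(\mathbf{M}_u)$ indexed by packed words $u$ (including the empty word), where $\mathbf{M}_u=\sum_{\mathrm{tass}(w)=u} w\in\mathbb{K}\langle A\rangle$, with product the product of $\mathbb{K}\langle A\rangle$ and coproduct $\Delta\mathbf{M}_u=\sum_{k=0}^{m}\mathbf{M}_{u_{\le k}}\otimes\mathbf{M}_{\mathrm{tass}(u_{>k})}$, where $m$ is the greatest letter of $u$, $u_{\le k}$ (resp. $u_{>k}$) is the subword of $u$ formed by its letters $\le k$ (resp. $>k$). Let $\mathbf{PQSym}^*$ be the graded dual Hopf algebra of $\mathbf{PQSym}$, with $(\mathbf{G}_{\mathbf a})$ the basis dual to $(\mathbf{F}_{\mathbf a})$. Then the linear map $\mathbf{NCQSym}\to\mathbf{PQSym}^*$, $\mathbf{M}_u\mapsto\sum_{\mathrm{tass}(\mathbf a)=u}\mathbf{G}_{\mathbf a}$ (sum over parking functions $\mathbf a$), is an injective morphism of Hopf algebras.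
   Context: $\mathbb{K}$ is a field of characteristic $0$, $A=\{a_1<a_2<\cdots\}$, and $\mathbb{K}\langle A\rangle=\varprojlim \mathbb{K}\langle a_1,\dots,a_n\rangle$. For a word $w$ whose distinct letters are $b_1<\dots<b_r$, $\mathrm{tass}(w)$ is the image of $w$ under the monoid morphism $b_j\mapsto j$; $w$ is packed if $\mathrm{tass}(w)=w$. A parking function of length $n$ is a word $\mathbf a$ of length $n$ over positive integers whose nondecreasing rearrangement $b_1\le\dots\le b_n$ satisfies $b_i\le i$ for all $i$. Parkization: for a word $w$ of length $n$ over positive integers let $d(w)=\min\{i : |\{j: w_j\le i\}|<i\}$; if $d(w)=n+1$ then $\mathrm{park}(w)=w$; otherwise let $w'$ be obtained from $w$ by decreasing by $1$ every letter $>d(w)$, and set $\mathrm{park}(w)=\mathrm{park}(w')$. $\mathbf{PQSym}$ is the Hopf algebra with basis $(\mathbf F_{\mathbf a})$ indexed by parking functions, product $\mathbf F_{\mathbf a'}\mathbf F_{\mathbf a''}=\sum_{\mathbf a\in \mathbf a'\,\sqcup\!\sqcup\,(\mathbf a''[n'])}\mathbf F_{\mathbf a}$, where $n'$ is the length of $\mathbf a'$, $\mathbf a''[n']$ is $\mathbf a''$ with $n'$ added to each letter and $\sqcup\!\sqcup$ is the shuffle product, and coproduct $\Delta\mathbf F_{\mathbf a}=\sum_{\mathbf a=uv}\mathbf F_{\mathrm{park}(u)}\otimes\mathbf F_{\mathrm{park}(v)}$ (sum over factorizations of $\mathbf a$ as a concatenation of two possibly empty words). *)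

(* Defs.v *)
From mathcomp Require Import all_boot all_algebra.
Set Implicit Arguments. Unset Strict Implicit. Unset Printing Implicit Defensive.
Import GRing.Theory.
Local Open Scope ring_scope.

(* Letters a_i are identified with positive integers i; words are seq nat. *)
Definition word := seq nat.

Definition tass (w : word) : word :=
  [seq (index x (sort leq (undup w))).+1 | x <- w].
Definition packed (w : word) : bool := tass w == w.

Definition parking (a : word) : bool :=
  let s := sort leq a in
  all (fun i => (0 < nth 0%N s i <= i.+1)%N) (iota 0 (size a)).

Definition dpark (w : word) : nat :=
  nth (size w).+1 [seq i <- iota 1 (size w).+1 | (count (fun x => x <= i)%N w < i)%N] 0.
Definition parkstep (w : word) : word :=
  [seq if (dpark w < x)%N then x.-1 else x | x <- w].
Fixpoint park_fuel (n : nat) (w : word) : word :=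
  if n is n'.+1 then
    if dpark w == (size w).+1 then w else park_fuel n' (parkstep w)
  else w.
(* each step strictly decreases the sum of letters, so this fuel suffices *)
Definition park (w : word) : word := park_fuel (sumn w).+1 w.

Fixpoint allwords (n m : nat) : seq word :=
  if n is n'.+1 then [seq a :: w | a <- iota 1 m, w <- allwords n' m]
  else [:: [::]].
Definition packed_words (n : nat) : seq word := filter packed (allwords n n).

Fixpoint shuffle (u : word) : word -> seq word :=
  match u with
  | [::] => fun v => [:: v]
  | x :: u' => fix sh (v : word) : seq word :=
      match v with
      | [::] => [:: u]
      | y :: v' => [seq x :: t | t <- shuffle u' v] ++ [seq y :: t | t <- sh v']
      end
  end.

Section Algebras.
Variable K : fieldType.

(* ---------- K<A> : series as functions on words; product of K<A> ---------- *)
Definition sermul (F G : word -> K) : word -> K :=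
  fun w => \sum_(i < (size w).+1) F (take i w) * G (drop i w).

(* ---------- NCQSym: an element sum_u f(u) M_u is coded by f : word -> K,
   supported on finitely many packed words ---------- *)
Definition isNCQ (f : word -> K) : Prop :=
  (forall w, ~~ packed w -> f w = 0) /\ exists N, forall w, (N < size w)%N -> f w = 0.

(* realization in K<A>: sum_u f(u) M_u = sum_w f(tass w) w *)
Definition realize (f : word -> K) : word -> K :=
  fun w => if all (fun x => 0 < x)%N w then f (tass w) else 0.

(* product = product of K<A>; the coefficient of M_w (w packed) is the
   coefficient of the word w in the realization *)
Definition NCQ_mul (f g : word -> K) : word -> K :=
  fun w => if packed w then sermul (realize f) (realize g) w else 0.
Definition NCQ_one : word -> K := fun w => (w == [::])%:R.
Definition NCQ_counit (f : word -> K) : K := f [::].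
Definition restr_le (k : nat) (u : word) : word := [seq x <- u | (x <= k)%N].
Definition restr_gt (k : nat) (u : word) : word := [seq x <- u | (k < x)%N].
Definition maxletter (u : word) : nat := foldr maxn 0%N u.
(* Delta M_u = sum_{k=0}^{m} M_{u_{<=k}} (x) M_{tass(u_{>k})}; tensors are
   coded by functions on pairs of words *)
Definition NCQ_comul (f : word -> K) : word * word -> K :=
  fun p => \sum_(u <- packed_words (size p.1 + size p.2))
     f u * \sum_(k < (maxletter u).+1)
        ((restr_le k u == p.1) && (tass (restr_gt k u) == p.2))%:R.

(* ---------- PQSym and its graded dual: an element sum_a g(a) G_a is coded
   by g : word -> K (supported on parking functions) ---------- *)
(* coproduct of PQSym: Delta F_a = sum_{a = uv} F_park(u) (x) F_park(v) *)
Definition DeltaF (a : word) : seq (word * word) :=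
  [seq (park (take i a), park (drop i a)) | i <- iota 0 (size a).+1].
(* product of PQSym: F_b F_c = sum_{a in b shuffle c[n']} F_a *)
Definition shiftw (n : nat) (c : word) : word := [seq (x + n)%N | x <- c].
Definition FF_mul (b c : word) : seq word := shuffle b (shiftw (size b) c).

(* dual structure: transposes of the coproduct/product of PQSym *)
Definition PQd_mul (g h : word -> K) : word -> K :=
  fun a => if parking a then \sum_(p <- DeltaF a) g p.1 * h p.2 else 0.
Definition PQd_one : word -> K := fun a => (a == [::])%:R.
Definition PQd_counit (g : word -> K) : K := g [::].
Definition PQd_comul (g : word -> K) : word * word -> K :=
  fun p => if parking p.1 && parking p.2 then \sum_(a <- FF_mul p.1 p.2) g a else 0.

Definition phi (f : word -> K) : word -> K :=
  fun a => if parking a then f (tass a) else 0.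
Definition phi2 (T : word * word -> K) : word * word -> K :=
  fun p => if parking p.1 && parking p.2 then T (tass p.1, tass p.2) else 0.

End Algebras.

(* Main.v *)
Require Import Defs.
From mathcomp Require Import all_boot all_algebra.
From mathcomp Require Import zify.
Import GRing.Theory.

Module Aux.
Set Implicit Arguments. Unset Strict Implicit. Unset Printing Implicit Defensive.
Section W1.
Definition Sw (w : word) := sort leq (undup w).

Lemma Sw_uniq w : uniq (Sw w).
Proof. by rewrite sort_uniq undup_uniq. Qed.
Lemma mem_Sw w x : (x \in Sw w) = (x \in w).
Proof. by rewrite mem_sort mem_undup. Qed.
Lemma Sw_sorted w : sorted leq (Sw w).
Proof. apply: sort_sorted; exact: leq_total. Qed.
Lemma Sw_ltn w : sorted ltn (Sw w).
Proof. by rewrite ltn_sorted_uniq_leq Sw_uniq Sw_sorted. Qed.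

Lemma tassE w : tass w = [seq (index x (Sw w)).+1 | x <- w].
Proof. by []. Qed.

Lemma idx_mono w : {in w &, forall x y, (x <= y) = (index x (Sw w) <= index y (Sw w))}.
Proof.
move=> x y xw yw; rewrite -mem_Sw in xw; rewrite -mem_Sw in yw.
apply/idP/idP => [xy|].
  rewrite leqNgt; apply/negP => /(sorted_ltn_index ltn_trans (Sw_ltn w) _ _ yw xw).
  by rewrite ltnNge xy.
exact: (sorted_leq_index leq_trans leqnn (Sw_sorted w) _ _ xw yw).
Qed.

Lemma undup_map_in (h : nat -> nat) (w : word) :
  {in w &, injective h} -> undup (map h w) = map h (undup w).
Proof.
elim: w => //= x w IH hinj.
have IH' : {in w &, injective h}.
  by move=> a b aw bw; apply: hinj; rewrite inE ?aw ?bw orbT.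
have -> : (h x \in map h w) = (x \in w).
  apply/mapP/idP => [[y yw /hinj ->]|xw]; rewrite ?inE ?eqxx ?yw ?orbT //.
  by exists x.
by case: (x \in w); rewrite /= (IH IH').
Qed.

Lemma index_map_in (h : nat -> nat) (w s : word) x :
  {in w &, injective h} -> x \in w -> all (mem w) s ->
  index (h x) (map h s) = index x s.
Proof.
move=> hinj xw; elim: s => //= y s IH /andP[yw sw].
rewrite IH //; congr (if _ then _ else _).
apply/eqP/eqP => [/hinj->//|->//].
Qed.

Lemma tass_map (h : nat -> nat) w :
  {in w &, forall x y, (x <= y) = (h x <= h y)} -> tass (map h w) = tass w.
Proof.
move=> hm.
have hinj : {in w &, injective h}.
  by move=> x y xw yw hxy; apply/eqP; rewrite eqn_leq (hm x y) // (hm y x) // hxy leqnn.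
have ES : Sw (map h w) = map h (Sw w).
  rewrite /Sw (@undup_map_in h w hinj).
  apply: (@homo_sort_map_in _ _ (mem w)).
  - move=> x y xw yw /= /andP[a b]; apply: hinj => //; apply/eqP; rewrite eqn_leq a b //.
  - move=> x y z /= _ _ _; exact: leq_trans.
  - move=> x y _ _; exact: leq_total.
  - by move=> x y xw yw; rewrite hm.
  - by apply/allP => x; rewrite mem_undup.
rewrite !tassE ES -map_comp; apply/eq_in_map => x xw /=.
rewrite (@index_map_in h w _ x hinj xw) //; apply/allP => y; rewrite mem_Sw //.
Qed.

Lemma tass_idem w : tass (tass w) = tass w.
Proof.
rewrite [X in tass X = _](tassE w) tass_map // => x y xw yw; rewrite ltnS; exact: idx_mono.
Qed.

Lemma tass_take i w : tass (take i (tass w)) = tass (take i w).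
Proof.
rewrite [X in tass (take i X)](tassE w) -map_take tass_map // => x y /mem_take xw /mem_take yw.
rewrite ltnS; exact: idx_mono.
Qed.

Lemma tass_drop i w : tass (drop i (tass w)) = tass (drop i w).
Proof.
rewrite [X in tass (drop i X)](tassE w) -map_drop tass_map // => x y /mem_drop xw /mem_drop yw.
rewrite ltnS; exact: idx_mono.
Qed.

Lemma size_tass w : size (tass w) = size w.
Proof. by rewrite size_map. Qed.

Lemma tass_pos w : all (fun x => 0 < x) (tass w).
Proof. by apply/allP => x /mapP[y _ ->]. Qed.

Lemma tass_nil w : (tass w == [::]) = (w == [::]).
Proof. by case: w. Qed.

Lemma perm_sortl (a : word) : perm_eq (sort leq a) a.
Proof. by rewrite perm_sort. Qed.

Lemma count_sort (a : word) p : count p (sort leq a) = count p a.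
Proof. exact: (permP (perm_sortl a)). Qed.

Lemma Sw_tass w : Sw (tass w) = iota 1 (size (Sw w)).
Proof.
apply: (sorted_eq leq_trans anti_leq (Sw_sorted _) (iota_sorted _ _)).
apply: uniq_perm; rewrite ?Sw_uniq ?iota_uniq // => x.
rewrite mem_Sw mem_iota; apply/mapP/idP => [[y yw ->]|].
  by rewrite -/(Sw w) add1n !ltnS index_mem mem_Sw.
case: x => // j; rewrite add1n ltnS => /= js.
exists (nth 0 (Sw w) j); last by rewrite -/(Sw w) index_uniq ?Sw_uniq.
by rewrite -mem_Sw mem_nth.
Qed.

Lemma sorted_nth_count (s : word) j k : sorted leq s -> j < size s ->
  (nth 0 s j <= k) = (j < count (fun x => x <= k) s).
Proof.
elim: s j => //= x s IH j pth.
have allx := order_path_min leq_trans pth.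
have ss : sorted leq s by apply: (path_sorted pth).
have gt0 : k < x -> count (fun x => x <= k) s = 0.
  move=> kx; apply/eqP; rewrite -leqn0 leqNgt -has_count; apply/hasP => -[y ys yk].
  by move/allP: allx => /(_ y ys) xy; move: (leq_trans xy yk); rewrite leqNgt kx.
case: j => [|j] /=; rewrite ?ltnS => jl.
  by case: (leqP x k) => kx; [rewrite add1n | rewrite add0n gt0].
rewrite IH //; case: (leqP x k) => kx; first by rewrite add1n ltnS.
rewrite add0n gt0 // ltn0.
Qed.

Lemma parkingP a : parking a <->
  (all (fun x => 0 < x) a /\ forall i, 0 < i <= size a -> i <= count (fun x => x <= i) a).
Proof.
rewrite /parking; set s := sort leq a.
have ss : sorted leq s by apply: sort_sorted; exact: leq_total.
have sz : size s = size a by rewrite size_sort.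
split.
  move/allP => H; split.
    apply/allP => x; rewrite -(perm_mem (perm_sortl a)) -/s => xs.
    have := H (index x s); rewrite mem_iota add0n -sz index_mem xs.
    by rewrite nth_index // => /(_ isT) /andP[].
  case=> // i /andP[_ il]; have := H i; rewrite mem_iota add0n il.
  by move=> /(_ isT) /andP[_]; rewrite sorted_nth_count ?sz // /s count_sort.
move=> [Pa C]; apply/allP => j; rewrite mem_iota add0n => /= jl.
apply/andP; split.
  by move/allP: Pa; apply; rewrite -(perm_mem (perm_sortl a)) -/s mem_nth // sz.
by rewrite sorted_nth_count ?sz // /s count_sort; apply: C.
Qed.

Lemma maxletter_ge u x : x \in u -> x <= maxletter u.
Proof.
elim: u => //= y u IH; rewrite inE => /orP[/eqP->|/IH]; first exact: leq_maxl.
by move/leq_trans; apply; exact: leq_maxr.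
Qed.

Lemma maxletter_mem u : u != [::] -> maxletter u \in u.
Proof.
rewrite /maxletter; elim: u => //= y u IH _.
case: (altP (u =P [::])) => [->|un]; first by rewrite maxn0 inE.
rewrite inE; case: (leqP y (foldr maxn 0 u)) => h.
  by rewrite IH // orbT.
by rewrite eqxx.
Qed.

Lemma mem_tass w x : (x \in tass w) = (0 < x <= size (Sw w)).
Proof. by rewrite -mem_Sw Sw_tass mem_iota add1n ltnS. Qed.

Lemma packed_mem u : packed u -> forall x, (x \in u) = (0 < x <= maxletter u).
Proof.
move=> /eqP pu.
have E : forall x, (x \in u) = (0 < x <= size (Sw u)) by move=> x; rewrite -{1}pu mem_tass.
suff -> : maxletter u = size (Sw u) by [].
case: (altP (u =P [::])) => [->//|un].
apply/eqP; rewrite eqn_leq.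
have := @maxletter_mem u un; rewrite E => /andP[_ ->] /=.
case: (size (Sw u)) E => // m E.
by apply: maxletter_ge; rewrite E leqnn.
Qed.

Lemma count_iota_le i m : i <= m -> count (fun x => x <= i) (iota 1 m) = i.
Proof.
move=> im; rewrite -(subnKC im) iotaD count_cat.
rewrite (eq_in_count (a2 := predT)) ?count_predT ?size_iota; last first.
  by move=> x; rewrite mem_iota add1n ltnS => /andP[].
rewrite (eq_in_count (a2 := pred0)) ?count_pred0 ?addn0 //.
by move=> x; rewrite mem_iota => /andP[h _] /=; rewrite leqNgt -add1n h.
Qed.

Lemma packed_parking u : packed u -> parking u.
Proof.
move=> pu; apply/parkingP; split.
  by move/eqP: (pu) => <-; exact: tass_pos.
move=> i /andP[i0 iu].
have E := packed_mem pu.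
case: (leqP i (maxletter u)) => im.
  apply: (leq_trans _ (count_undup _ _)).
  rewrite -count_sort -/(Sw u).
  have -> : Sw u = iota 1 (maxletter u).
    apply: (sorted_eq leq_trans anti_leq (Sw_sorted _) (iota_sorted _ _)).
    apply: uniq_perm; rewrite ?Sw_uniq ?iota_uniq // => x.
    by rewrite mem_Sw E mem_iota add1n ltnS.
  by rewrite count_iota_le.
rewrite (eq_in_count (a2 := predT)) ?count_predT //.
by move=> x; rewrite E => /andP[_ /leq_trans h]; rewrite /= h // ltnW.
Qed.

Lemma nth_filter0 (s : seq nat) (p : pred nat) d : nth d (filter p s) 0 = nth d s (find p s).
Proof. by elim: s => //= x s IH; case: (p x). Qed.

Lemma dpark_spec w : let d := dpark w in
  [/\ 0 < d <= (size w).+1, count (fun x => x <= d) w < d &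
      forall j, 0 < j < d -> j <= count (fun x => x <= j) w].
Proof.
rewrite /dpark nth_filter0.
set P := (fun i => _).
set s := iota 1 (size w).+1.
have hs : has P s.
  apply/hasP; exists (size w).+1; first by rewrite mem_iota ltn0Sn add1n ltnS leqnn.
  by rewrite /P ltnS count_size.
have fl : find P s < (size w).+1 by rewrite -(size_iota 1 (size w).+1) -has_find.
rewrite nth_iota // add1n; split.
- by rewrite ltnS.
- by have := nth_find 0 hs; rewrite nth_iota // add1n.
- case=> // j /andP[_]; rewrite ltnS => jf.
  have := before_find 0 jf; rewrite nth_iota ?add1n ?(leq_ltn_trans jf) //.
  by rewrite /P => /negbT; rewrite -leqNgt.
  exact: ltn_trans jf fl.
Qed.

Lemma count_le_split (w : word) d : 0 < d ->
  count (fun x => x <= d) w = count (fun x => x <= d.-1) w + count_mem d w.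
Proof.
case: d => // d _; elim: w => //= x w ->.
rewrite addnACA; congr (_ + _).
case: (ltngtP x d.+1) => [h|h|->].
- by rewrite addn0 -ltnS h.
- by rewrite addn0 leqNgt (ltnW h).
- by rewrite ltnn.
Qed.

Lemma sumn_parkstep (w : word) d :
  sumn [seq if d < x then x.-1 else x | x <- w] + count (fun x => d < x) w = sumn w.
Proof.
elim: w => //= x w IH; rewrite -IH; case: ltnP => /= h; lia.
Qed.

Lemma park_fuel_ok n w : all (fun x => 0 < x) w -> sumn w < n ->
  parking (park_fuel n w) /\ tass (park_fuel n w) = tass w.
Proof.
elim: n w => // n IH w wpos sn /=.
have [/andP[d0 dl] dc dmin] := dpark_spec w.
case: eqP => [de|dne].
  split => //; apply/parkingP; split => // i /andP[i0 il]; apply: dmin.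
  by rewrite i0 de ltnS.
set d := dpark w in d0 dl dc dmin dne *.
have dls : d <= size w by rewrite -ltnS ltn_neqAle dl andbT; apply/eqP.
have dnw : d \notin w.
  apply/count_memPn; move: dc; rewrite count_le_split //.
  have : d.-1 <= count (fun x => x <= d.-1) w.
    case: (posnP d.-1) => [->//|h]; apply: dmin; by rewrite h ltn_predL d0.
  move=> h1 h2; lia.
have cpos : 0 < count (fun x => d < x) w.
  have := count_predC (fun x => x <= d) w.
  move=> hc; rewrite (eq_count (a2 := predC (fun x => x <= d))); last by move=> x; rewrite /= ltnNge.
  by rewrite -(ltn_add2l (count (fun x => x <= d) w)) hc addn0 (leq_trans dc dls).
have pos' : all (fun x => 0 < x) (parkstep w).
  apply/allP => x /mapP[y yw ->]; case: (ltnP d y) => h; last by move/allP: wpos; apply.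
  lia.
have sn' : sumn (parkstep w) < n.
  have := sumn_parkstep w d; rewrite -/(parkstep w); lia.
have [IH1 IH2] := IH (parkstep w) pos' sn'.
split => //; rewrite IH2 /parkstep tass_map // => x y xw yw.
have xd : x <> d by move=> xd; move: dnw; rewrite -xd xw.
have yd : y <> d by move=> yd; move: dnw; rewrite -yd yw.
by case: (ltnP d x) => hx; case: (ltnP d y) => hy; apply/idP/idP => H; lia.
Qed.

Lemma park_ok w : all (fun x => 0 < x) w -> parking (park w) /\ tass (park w) = tass w.
Proof. by move=> wp; apply: park_fuel_ok. Qed.

Lemma shuffle_nil_r u : shuffle u [::] = [:: u].
Proof. by case: u. Qed.
Lemma shuffle_nil_l v : shuffle [::] v = [:: v].
Proof. by []. Qed.
Lemma shuffle_cons x u y v : shuffle (x :: u) (y :: v) =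
  [seq x :: t | t <- shuffle u (y :: v)] ++ [seq y :: t | t <- shuffle (x :: u) v].
Proof. by []. Qed.

Lemma shuffle_map (h : nat -> nat) x y :
  map (map h) (shuffle x y) = shuffle (map h x) (map h y).
Proof.
elim: x y => [|a X IHx] y; first by [].
elim: y => [|b Y IHy]; first by [].
have -> : map h (a :: X) = h a :: map h X by [].
have -> : map h (b :: Y) = h b :: map h Y by [].
rewrite !shuffle_cons map_cat -(IHx (b :: Y)) -IHy -!map_comp.
by congr (_ ++ _).
Qed.

Lemma shuffle_perm x y a : a \in shuffle x y -> perm_eq a (x ++ y).
Proof.
elim: x y a => [|c X IHx] y a; first by rewrite inE => /eqP->.
elim: y a => [|b Y IHy] a; first by rewrite shuffle_nil_r inE cats0 => /eqP->.
rewrite shuffle_cons mem_cat => /orP[] /mapP[t ht ->].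
  by rewrite /= perm_cons; apply: IHx.
apply/permP => p; have := IHy _ ht; move/permP => /(_ p).
rewrite /= !count_cat /= => ->; lia.
Qed.

Lemma count_cons_map (x z : nat) (u : word) (S : seq word) :
  count (pred1 (z :: u)) (map (cons x) S) = (x == z) * count (pred1 u) S.
Proof.
elim: S => [|t S IH] /=; first by rewrite muln0.
by rewrite IH mulnDr; congr (_ + _); rewrite eqseq_cons; case: (x == z); rewrite ?mul1n ?mul0n.
Qed.

Lemma count_shuffle r X Y u :
  all (fun z => z <= r) X -> all (fun z => r < z) Y ->
  count (pred1 u) (shuffle X Y) =
  ((filter (fun z => z <= r) u == X) && (filter (fun z => r < z) u == Y)).
Proof.
have base : forall Z v, all (fun z => r < z) Z ->
    (Z == v) = ((filter (fun z => z <= r) v == [::]) && (filter (fun z => r < z) v == Z)).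
  move=> Z v hZ; apply/eqP/andP => [<-|[/eqP h1 /eqP h2]].
    split; apply/eqP.
      apply/eqP; rewrite -(negbK (_ == _)) -has_filter; apply/hasPn => z /(allP hZ).
      by rewrite -ltnNge.
    by apply/all_filterP.
  have : ~~ has (fun z => z <= r) v by rewrite has_filter h1.
  move/hasPn => hv; rewrite -h2; apply/all_filterP/allP => z /hv; by rewrite -ltnNge.
have base' : forall Z v, all (fun z => z <= r) Z ->
    (Z == v) = ((filter (fun z => z <= r) v == Z) && (filter (fun z => r < z) v == [::])).
  move=> Z v hZ; apply/eqP/andP => [<-|[/eqP h1 /eqP h2]].
    split; apply/eqP; last first.
      apply/eqP; rewrite -(negbK (_ == _)) -has_filter; apply/hasPn => z /(allP hZ).
      by rewrite -leqNgt.
    by apply/all_filterP.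
  have : ~~ has (fun z => r < z) v by rewrite has_filter h2.
  move/hasPn => hv; rewrite -h1; apply/all_filterP/allP => z /hv; by rewrite -leqNgt.
elim: X Y u => [|x X IHx] Y u hX hY.
  by rewrite shuffle_nil_l /= addn0 (base Y u hY) eq_sym.
elim: Y u hY => [|y Y IHy] u hY.
  by rewrite shuffle_nil_r /= addn0 (base' (x :: X) u hX) eq_sym.
rewrite shuffle_cons count_cat.
have /andP[xr hX'] := hX; have /andP[ry hY'] := hY.
case: u => [|z u] /=.
  by rewrite !count_map /= !count_pred0 // (eq_count (a2 := pred0)) ?count_pred0.
rewrite !count_cons_map IHx /= ?xr ?ry ?hX ?hY // IHy /= ?xr ?hX //.
case: (leqP z r) => zr /=.
  have -> : (y == z) = false by apply/negbTE; apply: contraTneq zr => <-; rewrite -ltnNge.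
  by rewrite mul0n addn0 eqseq_cons (eq_sym z x); case: (x == z); rewrite ?mul1n ?mul0n.
have -> : (x == z) = false by apply/negbTE; apply: contraTneq zr => <-; rewrite -leqNgt.
by rewrite mul0n add0n eqseq_cons (eq_sym z y); case: (y == z); rewrite ?mul1n ?mul0n ?andbF.
Qed.

Local Open Scope ring_scope.

Lemma all_take_pos (a : word) i : all (fun x => 0 < x)%N a -> all (fun x => 0 < x)%N (take i a).
Proof. by move/allP=> h; apply/allP => x /mem_take; apply: h. Qed.
Lemma all_drop_pos (a : word) i : all (fun x => 0 < x)%N a -> all (fun x => 0 < x)%N (drop i a).
Proof. by move/allP=> h; apply/allP => x /mem_drop; apply: h. Qed.

Lemma mul_part (K : fieldType) (f g : word -> K) a :
  phi (NCQ_mul f g) a = PQd_mul (phi f) (phi g) a.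
Proof.
rewrite /phi /PQd_mul /NCQ_mul; case pa: (parking a) => //.
have [apos _] := parkingP a; move/(_ pa): apos => -[apos _].
rewrite /packed tass_idem eqxx /sermul /DeltaF big_map size_tass.
rewrite -[iota 0 _]/(index_iota 0 (size a).+1) big_mkord; apply: eq_bigr => i _ /=.
have [p1 t1] := park_ok (all_take_pos i apos).
have [p2 t2] := park_ok (all_drop_pos i apos).
rewrite p1 p2 t1 t2 /realize !all_take_pos ?all_drop_pos ?tass_pos //.
by rewrite tass_take tass_drop.
Qed.

End W1.
Section C1.
Lemma allwords_mem n m w :
  (w \in allwords n m) = (size w == n) && all (fun x => 0 < x <= m) w.
Proof.
elim: n w => [|n IH] w; first by case: w.
have -> : allwords n.+1 m = [seq a :: v | a <- iota 1 m, v <- allwords n m] by [].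
apply/allpairsP/idP => [[[a v] [/= ha hv ->]]|].
  rewrite IH in hv; case/andP: hv => sv av; rewrite mem_iota add1n ltnS in ha.
  by rewrite /= eqSS sv av ha.
case: w => // a v /= /andP[sv /andP[ha hv]]; rewrite eqSS in sv.
by exists (a, v); rewrite /= mem_iota add1n ltnS ha IH sv hv.
Qed.

Lemma allwords_uniq n m : uniq (allwords n m).
Proof.
elim: n => //= n IH; apply: allpairs_uniq => //; first exact: iota_uniq.
by move=> [a w] [b v] _ _ /= [-> ->].
Qed.

Lemma tass_in_pw a : tass a \in packed_words (size a).
Proof.
rewrite mem_filter /packed tass_idem eqxx allwords_mem size_tass eqxx /=.
apply/allP => x; rewrite mem_tass => /andP[-> h] /=.
apply: (leq_trans h); rewrite size_sort; exact: size_undup.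
Qed.

Lemma pw_uniq n : uniq (packed_words n).
Proof. by rewrite filter_uniq // allwords_uniq. Qed.

Lemma Sw_cat_sep p q N : all (fun z => z <= N) p -> all (fun z => N < z) q ->
  Sw (p ++ q) = Sw p ++ Sw q.
Proof.
move=> /allP hp /allP hq.
apply: (sorted_eq leq_trans anti_leq (Sw_sorted _)).
  rewrite (sorted_pairwise leq_trans) pairwise_cat -!(sorted_pairwise leq_trans).
  rewrite !Sw_sorted !andbT; apply/allrelP => x y; rewrite !mem_Sw => /hp xN /hq Ny.
  exact: ltnW (leq_ltn_trans xN Ny).
apply: uniq_perm; rewrite ?Sw_uniq //.
  rewrite cat_uniq !Sw_uniq andbT /=; apply/hasPn => y; rewrite !mem_Sw => /hq Ny.
  by apply/negP => /hp yN; move: (leq_ltn_trans yN Ny); rewrite ltnn.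
by move=> x; rewrite mem_cat !mem_Sw mem_cat.
Qed.

Lemma Sw_perm a b : perm_eq a b -> Sw a = Sw b.
Proof.
move=> pab; apply/perm_sortP; [exact: leq_total | exact: leq_trans | exact: anti_leq|].
apply: uniq_perm; rewrite ?undup_uniq // => x; rewrite !mem_undup; exact: perm_mem.
Qed.

Definition tmap (p q : word) (z : nat) := (index z (Sw p ++ Sw q)).+1.

Lemma count_tass_shuffle p q N u :
  all (fun z => z <= N) p -> all (fun z => N < z) q ->
  count (fun a => tass a == u) (shuffle p q) =
  (restr_le (size (Sw p)) u == tass p) &&
  (restr_gt (size (Sw p)) u == shiftw (size (Sw p)) (tass q)).
Proof.
move=> hp hq.
have -> : count (fun a => tass a == u) (shuffle p q) =
          count (pred1 u) (map (map (tmap p q)) (shuffle p q)).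
  rewrite count_map; apply: eq_in_count => a /shuffle_perm pa /=.
  by rewrite tassE (Sw_perm pa) (Sw_cat_sep hp hq).
rewrite shuffle_map.
have -> : map (tmap p q) p = tass p.
  rewrite tassE; apply/eq_in_map => z zp; rewrite /tmap index_cat mem_Sw zp //.
have -> : map (tmap p q) q = shiftw (size (Sw p)) (tass q).
  rewrite tassE /shiftw -map_comp; apply/eq_in_map => z zq; rewrite /tmap index_cat mem_Sw /=.
  have -> : (z \in p) = false.
    apply/negbTE/negP => zp; move/allP: hp => /(_ z zp) zN; move/allP: hq => /(_ z zq) Nz.
    by move: (leq_ltn_trans zN Nz); rewrite ltnn.
  by rewrite addnC addSn.
apply: count_shuffle.
  by apply/allP => z; rewrite mem_tass => /andP[].
by apply/allP => z /mapP[y /mapP[x _ ->] ->] /=; rewrite addnC addnS ltnS leq_addr.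
Qed.

Lemma sum_single (F : nat -> nat) N r :
  (forall k, k < N -> k != r -> F k = 0) -> \sum_(k < N) F k = (r < N) * F r.
Proof.
elim: N => [|N IH] H; first by rewrite big_ord0.
rewrite big_ord_recr /= IH; last by move=> k kN kr; apply: H => //; exact: ltnW.
case: (eqVneq N r) => [->|Nr]; first by rewrite ltnn ltnSn mul0n mul1n.
by rewrite (H N) // addn0 ltnS (leq_eqVlt r N) (eq_sym r N) (negbTE Nr).
Qed.

Lemma index_iota_in m n z : m <= z < m + n -> index z (iota m n) = z - m.
Proof.
move=> /andP[h1 h2].
have hz : z - m < n by lia.
have -> : z = nth 0 (iota m n) (z - m) by rewrite nth_iota //; lia.
by rewrite index_uniq ?iota_uniq ?size_iota // nth_iota //; lia.
Qed.

Lemma tass_shiftw r Y : tass (shiftw r Y) = tass Y.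
Proof. by rewrite tass_map // => x y _ _; rewrite leq_add2r. Qed.

Lemma sum_k u r X Y : packed u -> (forall z, (z \in X) = (0 < z <= r)) ->
  \sum_(k < (maxletter u).+1)
     ((restr_le k u == X) && (tass (restr_gt k u) == tass Y)) =
  (restr_le r u == X) && (restr_gt r u == shiftw r (tass Y)).
Proof.
move=> P HX; have E := packed_mem P; set M := maxletter u.
have F : forall k, k <= M -> restr_le k u == X -> k = r.
  move=> k kM /eqP h.
  have mem : forall z, (z \in restr_le k u) = (0 < z <= k).
    move=> z; rewrite mem_filter E; apply/andP/idP => [[a /andP[b _]]|/andP[a b]].
      by rewrite b a.
    by rewrite a b (leq_trans b kM).
  apply/eqP; rewrite eqn_leq; apply/andP; split.
    case: k {kM h} mem (h) => // k mem h.
    by have := mem k.+1; rewrite h HX leqnn => /andP[].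
  case: r HX => // r HX.
  by have := HX r.+1; rewrite -h mem leqnn => /andP[].
rewrite (sum_single (F := fun k => (restr_le k u == X) && (tass (restr_gt k u) == tass Y)) (r := r)); last first.
  move=> k kM kr; case h: (restr_le k u == X) => //.
  by move: kr; rewrite (F k _ h) ?eqxx // -ltnS.
case h: (restr_le r u == X); rewrite /= ?muln0 //.
have rM : r <= M.
  case: (posnP r) => [->//|r0].
  have : r \in X by rewrite HX leqnn r0.
  by move/eqP: h => <-; rewrite mem_filter => /andP[_ /maxletter_ge].
rewrite ltnS rM mul1n.
set Z := restr_gt r u.
have memZ : forall z, (z \in Z) = (r < z <= M).
  move=> z; rewrite mem_filter E; apply/andP/idP => [[a /andP[b c]]|/andP[a b]].
    by rewrite a c.
  by rewrite a b (leq_ltn_trans (leq0n r) a).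
have key : Z = shiftw r (tass Z).
  have SZ : Sw Z = iota r.+1 (M - r).
    apply: (sorted_eq leq_trans anti_leq (Sw_sorted _) (iota_sorted _ _)).
    apply: uniq_perm; rewrite ?Sw_uniq ?iota_uniq // => z.
    rewrite mem_Sw memZ mem_iota; apply/idP/idP => /andP[a b]; apply/andP; split; lia.
  rewrite tassE SZ /shiftw -map_comp -{1}(map_id Z); apply/eq_in_map => z.
  rewrite memZ => /andP[a b] /=; rewrite index_iota_in; lia.
congr (nat_of_bool _); apply/idP/idP => [/eqP h2|/eqP ->]; first by rewrite key h2.
by rewrite tass_shiftw tass_idem.
Qed.

End C1.
Section D1.
Lemma parking_le p : parking p -> all (fun z => z <= size p) p.
Proof.
move/parkingP => [_ C]; case: (posnP (size p)) => [/size0nil->//|s0].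
rewrite all_count eqn_leq count_size /=; by apply: C; rewrite s0 leqnn.
Qed.

Lemma parking_shuffle p1 p2 a : parking p1 -> parking p2 ->
  a \in shuffle p1 (shiftw (size p1) p2) -> parking a.
Proof.
move=> P1 P2 /shuffle_perm pa.
have hp := parking_le P1.
move/parkingP: (P1) => [pos1 C1]; move/parkingP: (P2) => [pos2 C2].
have sa : size a = size p1 + size p2 by rewrite (perm_size pa) size_cat size_map.
apply/parkingP; split.
  apply/allP => x; rewrite (perm_mem pa) mem_cat => /orP[/(allP pos1)//|].
  by case/mapP => y /(allP pos2) y0 ->; rewrite addn_gt0 y0.
move=> i /andP[i0 il]; rewrite (permP pa) count_cat.
case: (leqP i (size p1)) => h.
  by apply: leq_trans (C1 i _) (leq_addr _ _); rewrite i0 h.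
have c1 : size p1 <= count (fun x => x <= i) p1.
  rewrite (eq_in_count (a2 := predT)) ?count_predT // => x /(allP hp) /= xs.
  exact: leq_trans xs (ltnW h).
have c2 : i - size p1 <= count (fun x => x <= i) (shiftw (size p1) p2).
  rewrite count_map (eq_count (a2 := fun x => x <= i - size p1)).
    by apply: C2; rewrite sa in il; apply/andP; split; lia.
  by move=> x /=; rewrite leq_subRL ?(ltnW h) // addnC.
by apply: leq_trans (leq_add c1 c2); rewrite subnKC // ltnW.
Qed.

Local Open Scope ring_scope.

Lemma sum_ind (K : fieldType) (s : seq word) x (F : word -> K) :
  uniq s -> x \in s -> \sum_(u <- s) F u * (x == u)%:R = F x.
Proof.
move=> us xs; rewrite (big_rem x) //= eqxx mulr1 big1_seq ?addr0 // => u /= ur.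
have : u != x by move: ur; rewrite (mem_rem_uniq _ us) => /andP[].
by rewrite eq_sym => /negbTE ->; rewrite mulr0.
Qed.

Lemma sum_count (K : fieldType) (s : seq word) (P : pred word) :
  \sum_(a <- s) ((P a)%:R : K) = (count P s)%:R.
Proof. by elim: s => [|a s IH]; rewrite ?big_nil ?big_cons //= IH natrD. Qed.

Lemma comul_part (K : fieldType) (f : word -> K) p :
  phi2 (NCQ_comul f) p = PQd_comul (phi f) p.
Proof.
case: p => p1 p2; rewrite /phi2 /PQd_comul /=.
case P1: (parking p1); case P2: (parking p2) => //=.
rewrite /NCQ_comul /= !size_tass /FF_mul.
set q := shiftw (size p1) p2.
set n := (size p1 + size p2)%N.
have hp := parking_le P1.
have hq : all (fun z => size p1 < z)%N q.
  move/parkingP: P2 => [pos2 _].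
  by apply/allP => z /mapP[y /(allP pos2) y0 ->]; rewrite /= -{1}(add0n (size p1)) ltn_add2r.
transitivity (\sum_(u <- packed_words n)
                 f u * (count (fun a => tass a == u) (shuffle p1 q))%:R).
  apply: eq_big_seq => u; rewrite mem_filter => /andP[pu _].
  congr (f u * _); rewrite -natr_sum; congr (_ %:R).
  rewrite (@sum_k u (size (Sw p1)) (tass p1) p2 pu); last by move=> z; rewrite mem_tass.
  by rewrite (count_tass_shuffle _ hp hq) /q tass_shiftw.
rewrite [RHS](eq_big_seq (fun a => \sum_(u <- packed_words n) f u * (tass a == u)%:R)); last first.
  move=> a ash; rewrite /phi (parking_shuffle P1 P2 ash) sum_ind ?pw_uniq //.
  have -> : n = size a by rewrite /n (perm_size (shuffle_perm ash)) size_cat size_map.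
  exact: tass_in_pw.
rewrite exchange_big /=; apply: eq_bigr => u _.
by rewrite -mulr_sumr sum_count.
Qed.

End D1.
End Aux.
Import Aux.

Local Open Scope ring_scope.

Theorem proposition3p3 (K : fieldType) (charK0 : [pchar K] =i pred0) :
  (* linearity *)
  (forall (c : K) (f g : word -> K), isNCQ f -> isNCQ g ->
     forall a, phi (fun w => c * f w + g w) a = c * phi f a + phi g a) /\
  (* multiplicativity *)
  (forall f g : word -> K, isNCQ f -> isNCQ g ->
     forall a, phi (NCQ_mul f g) a = PQd_mul (phi f) (phi g) a) /\
  (* unit *)
  (forall a, phi (NCQ_one K) a = PQd_one K a) /\
  (* comultiplicativity *)
  (forall f : word -> K, isNCQ f ->
     forall p, phi2 (NCQ_comul f) p = PQd_comul (phi f) p) /\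
  (* counit *)
  (forall f : word -> K, isNCQ f -> PQd_counit (phi f) = NCQ_counit f) /\
  (* injectivity *)
  (forall f g : word -> K, isNCQ f -> isNCQ g ->
     (forall a, phi f a = phi g a) -> forall w, f w = g w).
Proof.
split.
  by move=> c f g _ _ a; rewrite /phi; case: (parking a); rewrite ?mulr0 ?addr0.
split; first by move=> f g _ _ a; exact: mul_part.
split.
  move=> a; rewrite /phi /PQd_one /NCQ_one; case pa: (parking a); first by rewrite tass_nil.
  by case: a pa.
split; first by move=> f _ p; exact: comul_part.
split; first by move=> f _; rewrite /PQd_counit /phi /NCQ_counit.
move=> f g [Hf _] [Hg _] H w; case pw: (packed w); last by rewrite Hf ?Hg ?pw.
by have := H w; rewrite /phi packed_parking // (eqP pw).
Qed.
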